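(* Let $k\geq 8$ and $2k+1\leq n\leq 3k$ be integers, and let $h(n,k)=\binom{n-1}{k-1}-\binom{n-k-1}{k-1}+1$. Then \[ \binom{n-2}{k-2}+2\binom{n-3}{k-2}+\frac{h(n,k)^2}{\binom{n-2}{k-2}+2\binom{n-3}{k-2}}>2\binom{n-1}{k-1}. \] *)

(* Defs.v *)
From mathcomp Require Import all_boot all_order all_algebra.
Set Implicit Arguments. Unset Strict Implicit. Unset Printing Implicit Defensive.
Import Order.TTheory GRing.Theory Num.Theory.
Local Open Scope ring_scope.

Definition h (n k : nat) : rat :=
  ('C(n.-1, k.-1))%:R - ('C(n - k - 1, k.-1))%:R + 1.

(* Main.v *)
Require Import Defs.
From mathcomp Require Import all_boot all_order all_algebra.
From mathcomp Require Import zify ring lra.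
Import Order.TTheory GRing.Theory Num.Theory.
Local Open Scope ring_scope.

Definition Nb (k j : nat) : rat := ('C((2 * k + j - 1)%N, (k - 1)%N))%:R.
Definition cb (k j : nat) : rat := ('C((k + j - 1)%N, (k - 1)%N))%:R.

Lemma I1N k j : (0 < k)%N ->
  ('C(2 * k.+1 + j - 1, k.+1 - 1) * (k * (k + j + 1)) =
   'C(2 * k + j - 1, k - 1) * ((2 * k + j + 1) * (2 * k + j)))%N.
Proof.
case: k => // p _.
have E1 := mul_bin_diag (2 * p + j).+3 p.
have E2 := mul_bin_down (2 * p + j).+2 p.
simpl in E1, E2.
rewrite (_ : (2 * p + j).+2 - p = p + j + 2)%N in E2; last lia.
rewrite (_ : 2 * p.+2 + j - 1 = (2 * p + j).+3)%N; last lia.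
rewrite (_ : 2 * p.+1 + j - 1 = (2 * p + j).+1)%N; last lia.
rewrite (_ : p.+2 - 1 = p.+1)%N; last lia.
rewrite (_ : p.+1 - 1 = p)%N; last lia.
nia.
Qed.

Lemma I2N k j : (0 < k)%N ->
  ('C(k.+1 + j - 1, k.+1 - 1) * k = 'C(k + j - 1, k - 1) * (k + j))%N.
Proof.
case: k => // p _.
have E1 := mul_bin_diag (p + j).+1 p.
simpl in E1.
rewrite (_ : p.+2 + j - 1 = (p + j).+1)%N; last lia.
rewrite (_ : p.+1 + j - 1 = (p + j))%N; last lia.
rewrite (_ : p.+2 - 1 = p.+1)%N; last lia.
rewrite (_ : p.+1 - 1 = p)%N; last lia.
nia.
Qed.

Lemma J1N k j : (0 < k)%N ->
  ('C(2 * k + j.+1 - 1, k - 1) * (k + j + 1) = 'C(2 * k + j - 1, k - 1) * (2 * k + j))%N.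
Proof.
case: k => // p _.
have E2 := mul_bin_down (2 * p + j).+2 p.
simpl in E2.
rewrite (_ : (2 * p + j).+2 - p = p + j + 2)%N in E2; last lia.
rewrite (_ : 2 * p.+1 + j.+1 - 1 = (2 * p + j).+2)%N; last lia.
rewrite (_ : 2 * p.+1 + j - 1 = (2 * p + j).+1)%N; last lia.
rewrite (_ : p.+1 - 1 = p)%N; last lia.
nia.
Qed.

Lemma J2N k j : (0 < k)%N ->
  ('C(k + j.+1 - 1, k - 1) * (j + 1) = 'C(k + j - 1, k - 1) * (k + j))%N.
Proof.
case: k => // p _.
have E2 := mul_bin_down (p + j).+1 p.
simpl in E2.
rewrite (_ : (p + j).+1 - p = j + 1)%N in E2; last lia.
rewrite (_ : p.+1 + j.+1 - 1 = (p + j).+1)%N; last lia.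
rewrite (_ : p.+1 + j - 1 = (p + j))%N; last lia.
rewrite (_ : p.+1 - 1 = p)%N; last lia.
nia.
Qed.

Ltac castN H := move/(congr1 (fun n : nat => n%:R : rat)): H; rewrite ?natrM ?natrD.

Lemma I1r k j : (0 < k)%N -> Nb k.+1 j * (k%:R * (k%:R + j%:R + 1)) =
  Nb k j * ((2 * k%:R + j%:R + 1) * (2 * k%:R + j%:R)).
Proof. move=> k0; have H := I1N k j k0; castN H; rewrite /Nb => H; lra. Qed.
Lemma I2r k j : (0 < k)%N -> cb k.+1 j * k%:R = cb k j * (k%:R + j%:R).
Proof. move=> k0; have H := I2N k j k0; castN H; rewrite /cb => H; lra. Qed.
Lemma J1r k j : (0 < k)%N -> Nb k j.+1 * (k%:R + j%:R + 1) = Nb k j * (2 * k%:R + j%:R).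
Proof. move=> k0; have H := J1N k j k0; castN H; rewrite /Nb => H; lra. Qed.
Lemma J2r k j : (0 < k)%N -> cb k j.+1 * (j%:R + 1) = cb k j * (k%:R + j%:R).
Proof. move=> k0; have H := J2N k j k0; castN H; rewrite /cb => H; lra. Qed.
Lemma kstep_alg (K J N c N' c' : rat) : 8 <= K -> 0 <= J -> 0 <= c ->
 N'*(K*(K+J+1)) = N*((2*K+J+1)*(2*K+J)) -> c'*K = c*(K+J) ->
 2*c*((2*K+J-1)*(2*K+J-2))^+2 <= N*(J*(K+J))^+2 ->
 2*c'*((2*(K+1)+J-1)*(2*(K+1)+J-2))^+2 <= N'*(J*(K+1+J))^+2.
Proof.
move=> K8 J0 c0 E1 E2 HS.
set x := K + J; set y := 2*K+J.
have x0 : 0 < x by rewrite /x; lra.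
have P : 0 <= (2*K+J+1)*x <= (2*K+J-1)*(2*K+J-2).
  rewrite /x; apply/andP; split; first nra. nra.
have T0 : 2*c*((2*K+J+1)*x)^+2 <= N*(J*x)^+2.
  apply: le_trans HS; rewrite ler_wpM2l //; first lra.
  case/andP: P; set a := _ * x; set b := _ * (_ - 2) => P1 P2.
  rewrite !expr2; nra.
have T : 2*c*(2*K+J+1)^+2 <= N*J^+2.
  have x2 : 0 < x^+2 by rewrite exprn_gt0.
  rewrite -(ler_pM2r x2).
  have -> : 2*c*(2*K+J+1)^+2*x^+2 = 2*c*((2*K+J+1)*x)^+2 by ring.
  by have -> : N*J^+2*x^+2 = N*(J*x)^+2 by ring.
have Kp : 0 < K*(x+1) by nra.
rewrite -(ler_pM2r Kp).
have -> : N' * (J * (K + 1 + J)) ^+ 2 * (K * (x + 1)) = N*((2*K+J+1)*(2*K+J)) * (J^+2 * (x+1)^+2).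
  by rewrite -E1 /x; ring.
have -> : 2 * c' * ((2 * (K + 1) + J - 1) * (2 * (K + 1) + J - 2)) ^+ 2 * (K * (x + 1))
   = 2 * (c'*K) * ((2*K+J+1)*(2*K+J))^+2 * (x+1) by ring.
rewrite E2.
have y0 : 0 <= 2*K+J by lra.
have H1 : 0 <= (2*K+J+1)*(2*K+J)*(x+1)^+2 by nra.
have H2 := ler_wpM2r H1 T.
apply: (@le_trans _ _ (2*c*(2*K+J+1)^+2 * ((2*K+J+1)*(2*K+J)*(x+1)^+2))); last first.
  apply: (le_trans H2); rewrite le_eqVlt; apply/orP; left; apply/eqP; rewrite /x; ring.
have H3 : 0 <= 2*c*(2*K+J+1)^+2*(2*K+J)*(x+1).
  repeat apply: mulr_ge0; rewrite ?sqr_ge0 // /x; lra.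
have H4 : x*(2*K+J) <= (2*K+J+1)*(x+1) by nra.
have H5 := ler_wpM2l H3 H4.
apply: le_trans (le_trans H5 _); rewrite le_eqVlt; apply/orP; left; apply/eqP; rewrite /x; ring.
Qed.
Lemma diag_alg (K N0 c0 N1 c1 N2 c2 : rat) : 8 <= K -> 0 <= c0 -> 0 <= N0 ->
 N1*(K*(K+K+1)) = N0*((2*K+K+1)*(2*K+K)) ->
 c1*K = c0*(K+K) ->
 N2*((K+1)+K+1) = N1*(2*(K+1)+K) ->
 c2*(K+1) = c1*((K+1)+K) ->
 2*c0*((2*K+K-1)*(2*K+K-2))^+2 <= N0*(K*(K+K))^+2 ->
 2*c2*((2*(K+1)+(K+1)-1)*(2*(K+1)+(K+1)-2))^+2 <= N2*((K+1)*((K+1)+(K+1)))^+2.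
Proof.
move=> K8 c00 N00 I1 I2 J1 J2 HS.
have F1 : N2*((2*K+2)*K*(2*K+1)) = N0*((3*K+1)*(3*K)*(3*K+2)).
  have e1 := congr1 (fun t => t * (K*(2*K+1))) J1.
  have e2 := congr1 (fun t => t * (3*K+2)) I1. simpl in e1, e2. lra.
have F2 : c2*((K+1)*K) = c0*(2*K*(2*K+1)).
  have e1 := congr1 (fun t => t * K) J2.
  have e2 := congr1 (fun t => t * (2*K+1)) I2. simpl in e1, e2. lra.
have Q : 4*(2*K+1)^+2*(3*K+2)*(3*K+1) <= 3*((3*K-1)*(3*K-2))^+2.
  have [t t0 ->] : exists2 t, 0 <= t & K = t + 8 by exists (K - 8); [lra| ring].
  have t2 : 0 <= t^+2 by rewrite exprn_ge0.
  have t3 : 0 <= t^+3 by rewrite exprn_ge0.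
  have t4 : 0 <= t^+4 by rewrite exprn_ge0.
  lra.
have p1 : 0 <= c0*(K^+2*(2*K+2)*(3*K+2)*(3*K+1)).
  repeat apply: mulr_ge0; rewrite ?exprn_ge0 //; lra.
have h1 := ler_wpM2r p1 Q.
have p2 : 0 <= 3/2*(K^+2*(2*K+2)*(3*K+1)*(3*K+2)).
  repeat apply: mulr_ge0; rewrite ?exprn_ge0 //; lra.
have h2 := ler_wpM2r p2 HS.
have K4 : K^+4 <= (K+1)^+4.
  rewrite lerXn2r ?nnegrE //; lra.
have p3 : 0 <= 12*N0*(K^+2*(K+1)*(3*K+1)*(3*K+2)).
  repeat apply: mulr_ge0; rewrite ?exprn_ge0 //; lra.
have h3 := ler_wpM2l p3 K4.
have M0 : 0 < ((K+1)*K)*((2*K+2)*K*(2*K+1)).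
  repeat apply: mulr_gt0; lra.
rewrite -(ler_pM2r M0).
have e1 := congr1 (fun t => t * (2*((2*K+2)*K*(2*K+1))*((3*K+2)*(3*K+1))^+2)) F2.
have e2 := congr1 (fun t => t * (((K+1)*K)*((K+1)*((K+1)+(K+1)))^+2)) F1.
simpl in e1, e2.
lra.
Qed.
Lemma final_alg (K J N a b c : rat) : 8 <= K -> 1 <= J -> 0 < N -> 1 <= c -> 0 <= b ->
 (2*K+J-1)*a = (K-1)*N -> (2*K+J-2)*b = (K+J)*a ->
 2*c*((2*K+J-1)*(2*K+J-2))^+2 <= N*(J*(K+J))^+2 ->
 2*N < (a+2*b) + (N - c + 1)^+2/(a+2*b).
Proof.
move=> K8 J1 N0 c1 b0 A1 A2 HS.
have a0 : 0 < a.
  have : 0 < (2*K+J-1)*a by rewrite A1; apply: mulr_gt0 => //; lra.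
  by rewrite pmulr_rgt0 //; lra.
set D := a + 2*b.
have D0 : 0 < D by rewrite /D; lra.
set m := (2*K+J-1)*(2*K+J-2).
have m0 : 0 < m by rewrite /m; apply: mulr_gt0; lra.
have EE : (N - D) * m = N*(J*(K+J)).
  have e1 := congr1 (fun t => t * (2*K+J-2)) A1.
  have e2 := congr1 (fun t => t * (2*K+J-1)) A2.
  have e3 := congr1 (fun t => t * (K+J)) A1.
  simpl in e1, e2, e3. rewrite /D /m. lra.
have E2 : 2*N*c <= (N-D)^+2.
  have h := ler_wpM2l (ltW N0) HS.
  have m2 : 0 < m^+2 by rewrite exprn_gt0.
  rewrite -(ler_pM2r m2).
  have -> : (N-D)^+2 * m^+2 = ((N-D) * m)^+2 by ring.
  rewrite EE.
  apply: le_trans (le_trans h _); rewrite le_eqVlt; apply/orP; left; apply/eqP; rewrite /m; ring.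
have Dn : D != 0 by rewrite gt_eqF.
have -> : D + (N - c + 1)^+2/D = (D^+2 + (N-c+1)^+2)/D.
  by field; exact: Dn.
rewrite ltr_pdivlMr //.
have cc : 0 <= (c-1)^+2 by exact: sqr_ge0.
lra.
Qed.

Definition Sp (k j : nat) : Prop :=
  2 * cb k j * ((2 * k%:R + j%:R - 1) * (2 * k%:R + j%:R - 2)) ^+ 2
  <= Nb k j * (j%:R * (k%:R + j%:R)) ^+ 2.

Lemma kstep k j : (8 <= k)%N -> Sp k j -> Sp k.+1 j.
Proof.
move=> k8 HS; rewrite /Sp -[k.+1%:R]natr1.
have k0 : (0 < k)%N by lia.
have K8 : (8%:R : rat) <= k%:R by rewrite ler_nat.
apply: (@kstep_alg k%:R j%:R (Nb k j) (cb k j) (Nb k.+1 j) (cb k.+1 j)) => //.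
all: first [exact: (I1r k j k0) | exact: (I2r k j k0) | exact: ler0n | lra].
Qed.

Lemma diag k : (8 <= k)%N -> Sp k k -> Sp k.+1 k.+1.
Proof.
move=> k8 HS; rewrite /Sp -[k.+1%:R]natr1.
have k0 : (0 < k)%N by lia.
have K8 : (8%:R : rat) <= k%:R by rewrite ler_nat.
have J1 := J1r k.+1 k (ltn0Sn k); rewrite -[k.+1%:R]natr1 in J1.
have J2 := J2r k.+1 k (ltn0Sn k); rewrite -[k.+1%:R]natr1 in J2.
apply: (@diag_alg k%:R (Nb k k) (cb k k) (Nb k.+1 k) (cb k.+1 k) (Nb k.+1 k.+1) (cb k.+1 k.+1)) => //.
all: first [exact: (I1r k k k0) | exact: (I2r k k k0) | exact: ler0n | lra].
Qed.


Lemma base_alg (N c : nat -> rat) : N 1%N = 11440%:R -> c 1%N = 8%:R ->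
  (forall j, (1 <= j <= 7)%N -> N j.+1 * (8%:R + j%:R + 1) = N j * (2 * 8%:R + j%:R)) ->
  (forall j, (1 <= j <= 7)%N -> c j.+1 * (j%:R + 1) = c j * (8%:R + j%:R)) ->
  forall j, (1 <= j <= 8)%N ->
  2 * c j * ((2 * 8%:R + j%:R - 1) * (2 * 8%:R + j%:R - 2)) ^+ 2
  <= N j * (j%:R * (8%:R + j%:R)) ^+ 2.
Proof.
move=> A1 C1 HN HC.
have n2 := HN 1%N isT. have n3 := HN 2%N isT. have n4 := HN 3%N isT. have n5 := HN 4%N isT.
have n6 := HN 5%N isT. have n7 := HN 6%N isT. have n8 := HN 7%N isT.
have c2 := HC 1%N isT. have c3 := HC 2%N isT. have c4 := HC 3%N isT. have c5 := HC 4%N isT.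
have c6 := HC 5%N isT. have c7 := HC 6%N isT. have c8 := HC 7%N isT.
move=> j /andP[h1 h2].
case: j h1 h2 => [|j] h1 h2; first (exfalso; lia).
do 8 (case: j h1 h2 => [|j] h1 h2; first lra).
exfalso; lia.
Qed.

Lemma base j : (1 <= j <= 8)%N -> Sp 8 j.
Proof.
have A1 : Nb 8 1 = 11440%:R by rewrite /Nb; congr (_ %:R); vm_compute.
have C1 : cb 8 1 = 8%:R by rewrite /cb; congr (_ %:R); vm_compute.
have H := (@base_alg (Nb 8) (cb 8) A1 C1).
have H2 : (forall j, (1 <= j <= 7)%N -> Nb 8 j.+1 * (8%:R + j%:R + 1) = Nb 8 j * (2 * 8%:R + j%:R)).
  move=> i _; exact: (J1r 8 i isT).
have H3 : (forall j, (1 <= j <= 7)%N -> cb 8 j.+1 * (j%:R + 1) = cb 8 j * (8%:R + j%:R)).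
  move=> i _; exact: (J2r 8 i isT).
have H4 := H H2 H3 j.
exact: H4.
Qed.

Lemma kiter k j m : (8 <= k)%N -> Sp k j -> Sp (k + m) j.
Proof.
move=> k8 H; elim: m => [|m IH]; first by rewrite addn0.
rewrite addnS; apply: kstep => //; lia.
Qed.

Lemma diter m : Sp (8 + m) (8 + m).
Proof.
elim: m => [|m IH]; first by apply: base.
rewrite addnS; apply: diag => //; lia.
Qed.

Lemma Sall k j : (8 <= k)%N -> (1 <= j <= k)%N -> Sp k j.
Proof.
move=> k8 /andP[j1 jk].
case: (leqP j 8) => j8.
  have := @kiter 8 j (k - 8) (leqnn 8) (@base j (introT andP (conj j1 j8))).
  by rewrite subnKC.
have Sjj : Sp j j.
  have := diter (j - 8); rewrite subnKC //; lia.
have := @kiter j j (k - j) (ltnW j8) Sjj.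
by rewrite subnKC.
Qed.

Lemma AN k j : (2 <= k)%N ->
  ('C(2*k+j-2, k-2) * (2*k+j-1) = (k-1) * 'C(2*k+j-1, k-1))%N.
Proof.
case: k => [|[|q]] // _.
have E1 := mul_bin_diag (2 * q + j).+3 q. simpl in E1.
rewrite (_ : 2 * q.+2 + j - 2 = (2 * q + j).+2)%N; last lia.
rewrite (_ : 2 * q.+2 + j - 1 = (2 * q + j).+3)%N; last lia.
rewrite (_ : q.+2 - 2 = q)%N; last lia.
rewrite (_ : q.+2 - 1 = q.+1)%N; last lia.
nia.
Qed.

Lemma BN k j : (2 <= k)%N ->
  ('C(2*k+j-3, k-2) * (2*k+j-2) = (k+j) * 'C(2*k+j-2, k-2))%N.
Proof.
case: k => [|[|q]] // _.
have E2 := mul_bin_down (2 * q + j).+2 q. simpl in E2.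
rewrite (_ : (2 * q + j).+2 - q = q + j + 2)%N in E2; last lia.
rewrite (_ : 2 * q.+2 + j - 2 = (2 * q + j).+2)%N; last lia.
rewrite (_ : 2 * q.+2 + j - 3 = (2 * q + j).+1)%N; last lia.
rewrite (_ : q.+2 - 2 = q)%N; last lia.
nia.
Qed.

Theorem lemma2p8 (n k : nat) (hk : (8 <= k)%N) (hn1 : (2 * k + 1 <= n)%N)
  (hn2 : (n <= 3 * k)%N) :
  let D : rat := ('C(n - 2, k - 2))%:R + 2 * ('C(n - 3, k - 2))%:R in
  D + h n k ^+ 2 / D > 2 * ('C(n - 1, k - 1))%:R.
Proof.
cbv zeta; rewrite /h -!subn1.
set j := (n - 2 * k)%N.
have hn : n = (2 * k + j)%N by rewrite /j; lia.
have j1 : (1 <= j <= k)%N by rewrite /j; lia.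
have HS := @Sall k j hk j1.
move: HS; rewrite /Sp /Nb /cb.
rewrite hn (_ : (2 * k + j - k - 1 = k + j - 1)%N); last lia.
move=> HS.
have k2 : (2 <= k)%N by lia.
have A := AN k j k2; have B := BN k j k2.
move/(congr1 (fun x : nat => x%:R : rat)): A; rewrite !natrM => A.
move/(congr1 (fun x : nat => x%:R : rat)): B; rewrite !natrM => B.
have e1 : ((2 * k + j - 1)%N%:R : rat) = 2 * k%:R + j%:R - 1.
  by rewrite natrB ?natrD ?natrM; [lra | lia].
have e2 : ((2 * k + j - 2)%N%:R : rat) = 2 * k%:R + j%:R - 2.
  by rewrite natrB ?natrD ?natrM; [lra | lia].
have e3 : ((k - 1)%N%:R : rat) = k%:R - 1.
  by rewrite natrB; [lra | lia].
have e4 : ((k + j)%N%:R : rat) = k%:R + j%:R by rewrite natrD.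
rewrite e1 e3 in A; rewrite e2 e4 in B.
apply: (@final_alg k%:R j%:R) => //.
- by rewrite (ler_nat _ 8 k).
- by rewrite ler1n; case/andP: j1.
- by rewrite ltr0n bin_gt0; lia.
- by rewrite ler1n bin_gt0; lia.
- by rewrite mulrC A.
- by rewrite mulrC B.
Qed.
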